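(* If $m,n,s,t$ are positive integers, then the direct product ${\sf M}_m(C_{2s+1})\times {\sf M}_n(C_{2t+1})$ is not a cover graph.
   Context: $C_k$ is the cycle on $k$ vertices. A graph is a cover graph if it is the underlying (undirected) graph of the Hasse diagram of some finite partially ordered set. The direct product $G \times H$ has vertex set $V(G)\times V(H)$, with $(g_i,h_s)$ adjacent to $(g_j,h_t)$ if and only if $g_ig_j \in E(G)$ and $h_sh_t \in E(H)$. For a graph $G$ with vertex set $V_0=\{\langle 0,j\rangle : 0\le j\le n-1\}$ and edge set $E_0$, and $m>0$, the generalized Mycielskian ${\sf M}_m(G)$ has vertex set $V_0\cup V_1\cup\cdots\cup V_m\cup\{u\}$ where $V_i=\{\langle i,j\rangle: 0\le j\le n-1\}$, and edge set $E_0\cup E_1\cup\cdots\cup E_m\cup\{\langle m,j\rangle u: 0\le j\le n-1\}$, where $E_i=\{\langle i-1,j\rangle\langle i,k\rangle : \langle 0,j\rangle\langle 0,k\rangle\in E_0\}$ for $1\le i\le m$. *)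

(* Defs.v *)
From mathcomp Require Import all_boot.
Set Implicit Arguments. Unset Strict Implicit. Unset Printing Implicit Defensive.

Definition cycle_rel (k : nat) : rel 'I_k :=
  fun i j => (val j == i.+1 %% k) || (val i == j.+1 %% k).

Arguments cycle_rel k : clear implicits.

(* Vertex <i, j> (0 <= i <= m, j in T) is Some (i, j); the apex u is None.
   <a,j> ~ <b,k> iff jk in E_0 and (a = b = 0, or |a - b| = 1);
   u ~ <m, j> for every j. *)
Definition myc_rel (T : finType) (e : rel T) (m : nat) : rel (option ('I_m.+1 * T)) :=
  fun x y =>
    match x, y with
    | Some (a, j), Some (b, k) =>
        e j k && [|| (val a == 0) && (val b == 0), val a + 1 == val b | val b + 1 == val a]
    | Some (a, _), None => val a == m
    | None, Some (b, _) => val b == m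
    | None, None => false
    end.

Arguments myc_rel {T} e m.

Definition prod_rel (A B : finType) (eA : rel A) (eB : rel B) : rel (A * B) :=
  fun x y => eA x.1 y.1 && eB x.2 y.2.

Definition is_partial_order (V : finType) (le : rel V) : Prop :=
  reflexive le /\ antisymmetric le /\ transitive le.

Definition covers (V : finType) (le : rel V) (x y : V) : bool :=
  [&& x != y, le x y &
      [forall z, ~~ [&& z != x, z != y, le x z & le z y]]].

Definition is_cover_graph (V : finType) (e : rel V) : Prop :=
  exists le : rel V, is_partial_order le /\
    forall x y, e x y = covers le x y || covers le y x.

(* Main.v *)
Require Import Defs.
From mathcomp Require Import all_boot all_order all_algebra.
From mathcomp Require Import zify.
Set Implicit Arguments. Unset Strict Implicit. Unset Printing Implicit Defensive.
Import GRing.Theory.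

Definition Uv (V : finType) (le : rel V) (x y : V) : int :=
  if le x y then 1%R else (-1)%R.

Section dummy. End dummy.

Lemma edge_neq (V : finType) (le e : rel V) :
  (forall x y, e x y = covers le x y || covers le y x) ->
  forall x y, e x y -> x != y.
Proof.
move=> He x y; rewrite He /covers => /orP[/and3P[h _ _]|/and3P[h _ _]] //.
by rewrite eq_sym.
Qed.

Lemma edge_dir (V : finType) (le e : rel V) :
  antisymmetric le ->
  (forall x y, e x y = covers le x y || covers le y x) ->
  forall x y, e x y -> le x y = ~~ le y x.
Proof.
move=> anti He x y exy; have nxy := edge_neq He exy.
case lxy: (le x y); case lyx: (le y x) => //.
- have exy' : x = y by apply: anti; rewrite lxy lyx.
  by rewrite exy' eqxx in nxy.
- by move: exy; rewrite He /covers lxy lyx !andbF.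
Qed.

Lemma C1 (V : finType) (le e : rel V) :
  antisymmetric le ->
  (forall x y, e x y = covers le x y || covers le y x) ->
  forall x y, e x y -> (Uv le x y + Uv le y x = 0)%R.
Proof.
move=> anti He x y exy; rewrite /Uv (edge_dir anti He exy).
by case: (le y x) => /=; lia.
Qed.

Lemma short3 (V : finType) (le e : rel V) :
  antisymmetric le -> transitive le ->
  (forall x y, e x y = covers le x y || covers le y x) ->
  forall x y z w, e x w -> le x y -> le y z -> le z w -> y != x -> y != w -> False.
Proof.
move=> anti tr He x y z w exw lxy lyz lzw nyx nyw.
have lyw : le y w := tr _ _ _ lyz lzw.
have lxw : le x w := tr _ _ _ lxy lyw.
have := edge_dir anti He exw; rewrite lxw => /esym nlwx.
move: exw; rewrite He /covers lxw (negbTE nlwx) !andbF orbF => /and3P[_ _ /forallP /(_ y)].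
by rewrite nyx nyw lxy lyw.
Qed.

Lemma no3 (V : finType) (le e : rel V) :
  antisymmetric le -> transitive le -> symmetric e ->
  (forall x y, e x y = covers le x y || covers le y x) ->
  forall a b c d, e d a -> b != a -> b != d ->
  ~~ [&& le a b, le b c & le c d].
Proof.
move=> anti tr esym He a b c d eda nba nbd; apply/negP => /and3P[h1 h2 h3].
by apply: (short3 anti tr He _ h1 h2 h3) => //; rewrite esym.
Qed.

Lemma C2 (V : finType) (le e : rel V) :
  antisymmetric le -> transitive le -> symmetric e ->
  (forall x y, e x y = covers le x y || covers le y x) ->
  forall a b c d, e a b -> e b c -> e c d -> e d a ->
  (Uv le a b + Uv le b c + Uv le c d + Uv le d a = 0)%R.
Proof.
move=> anti tr esym He a b c d eab ebc ecd eda.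
have c1 := C1 anti He.
case: (eqVneq a c) => [<-|nac].
  have h1 := c1 _ _ eab; have h2 := c1 _ _ eda; lia.
case: (eqVneq b d) => [<-|nbd].
  have h1 := c1 _ _ eab; have h2 := c1 _ _ ebc; lia.
have nab := edge_neq He eab; have nbc := edge_neq He ebc.
have ncd := edge_neq He ecd; have nda := edge_neq He eda.
have nba : b != a by rewrite eq_sym. have ncb : c != b by rewrite eq_sym.
have ndc : d != c by rewrite eq_sym. have nad : a != d by rewrite eq_sym.
have nca : c != a by rewrite eq_sym. have ndb : d != b by rewrite eq_sym.
have eba : e b a by rewrite esym. have ecb : e c b by rewrite esym.
have edc : e d c by rewrite esym. have ead : e a d by rewrite esym.
have dba := edge_dir anti He eba; have dcb := edge_dir anti He ecb.
have ddc := edge_dir anti He edc; have dad := edge_dir anti He ead.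
have N := no3 anti tr esym He.
have n1 := N a b c d eda nba nbd.
have n2 := N b c d a eab ncb nca.
have n3 := N c d a b ebc ndc ndb.
have n4 := N d a b c ecd nad nac.
have n5 := N d c b a ead ncd nca.
have n6 := N c b a d edc nbc nbd.
have n7 := N b a d c ecb nab nac.
have n8 := N a d c b eba nda ndb.
move: n1 n2 n3 n4 n5 n6 n7 n8; rewrite dba dcb ddc dad /Uv.
by case: (le a b); case: (le b c); case: (le c d); case: (le d a) => //= *;
  clear -c1; lia.
Qed.


Lemma Fwd (V : Type) (e : rel V) (U : V -> V -> int) :
  (forall x y, e x y -> (U x y + U y x = 0)%R) ->
  (forall a b c d, e a b -> e b c -> e c d -> e d a ->
     (U a b + U b c + U c d + U d a = 0)%R) ->
  symmetric e ->
  forall a b r r', e a r -> e r b -> e a r' -> e r' b ->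
  (U a r + U r b = U a r' + U r' b)%R.
Proof.
move=> c1 c2 es a b r r' ear erb ear' er'b.
have h := c2 _ _ _ _ ear erb (etrans (es _ _) (er'b)) (etrans (es _ _) (ear')).
have h1 := c1 _ _ er'b; have h2 := c1 _ _ ear'.
lia.
Qed.

Lemma telescope (f : nat -> int) N :
  (\sum_(i < N) (f i - f i.+1) = f 0 - f N)%R.
Proof.
elim: N => [|N IH]; first by rewrite big_ord0 subrr.
rewrite big_ord_recr /= IH; lia.
Qed.

Lemma prism (V : Type) (e : rel V) (U : V -> V -> int) :
  (forall x y, e x y -> (U x y + U y x = 0)%R) ->
  (forall a b c d, e a b -> e b c -> e c d -> e d a ->
     (U a b + U b c + U c d + U d a = 0)%R) ->
  symmetric e ->
  forall N (a b ea eb c : nat -> V),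
  (forall i, e (a i) (ea i) /\ e (ea i) (a i.+1)) ->
  (forall i, e (b i) (eb i) /\ e (eb i) (b i.+1)) ->
  (forall i, [/\ e (a i) (c i), e (c i) (a i.+1), e (b i) (c i) & e (c i) (b i.+1)]) ->
  a N = a 0 -> b N = b 0 -> c N = c 0 ->
  (\sum_(i < N) (U (a i) (ea i) + U (ea i) (a i.+1)) =
   \sum_(i < N) (U (b i) (eb i) + U (eb i) (b i.+1)))%R.
Proof.
move=> c1 c2 es N a b ea eb c Ha Hb Hc aN bN cN.
pose D i := (U (a i) (c i) + U (c i) (b i))%R.
have step : forall i, ((U (a i) (ea i) + U (ea i) (a i.+1)) -
                      (U (b i) (eb i) + U (eb i) (b i.+1)) = D i - D i.+1)%R.
  move=> i; have [ha1 ha2] := Ha i; have [hb1 hb2] := Hb i.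
  have [hc1 hc2 hc3 hc4] := Hc i; have [hc1' hc2' hc3' hc4'] := Hc i.+1.
  have f1 := Fwd c1 c2 es ha1 ha2 hc1 hc2.
  have f2 := Fwd c1 c2 es hb1 hb2 hc3 hc4.
  have f3 := Fwd c1 c2 es hc1' (etrans (es _ _) (hc3')) (etrans (es _ _) (hc2)) hc4.
  have g1 := c1 _ _ hc3; have g2 := c1 _ _ hc2.
  rewrite /D; lia.
apply/eqP; rewrite -subr_eq0 -sumrB (eq_bigr (fun i : 'I_N => D i - D i.+1)%R); last first.
  by move=> i _; apply: step.
by rewrite telescope /D aN bN cN subrr.
Qed.

Lemma cone (V : Type) (e : rel V) (U : V -> V -> int) :
  (forall x y, e x y -> (U x y + U y x = 0)%R) ->
  (forall a b c d, e a b -> e b c -> e c d -> e d a ->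
     (U a b + U b c + U c d + U d a = 0)%R) ->
  symmetric e ->
  forall N (a ea : nat -> V) (v : V),
  (forall i, e (a i) (ea i) /\ e (ea i) (a i.+1)) ->
  (forall i, e (a i) v) -> a N = a 0 ->
  (\sum_(i < N) (U (a i) (ea i) + U (ea i) (a i.+1)) = 0)%R.
Proof.
move=> c1 c2 es N a ea v Ha Hv aN.
rewrite (eq_bigr (fun i : 'I_N => U (a i) v - U (a i.+1) v)%R).
  by rewrite (telescope (fun i => U (a i) v)) aN subrr.
move=> i _; have [h1 h2] := Ha i.
have f := Fwd c1 c2 es h1 h2 (Hv i) (etrans (es _ _) (Hv i.+1)).
have g := c1 _ _ (Hv i.+1); lia.
Qed.


Definition om (k : nat) (Hk : 0 < k) (j : nat) : 'I_k := Ordinal (ltn_pmod j Hk).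
Definition gv (m k : nat) (Hk : 0 < k) (a j : nat) : option ('I_m.+1 * 'I_k) :=
  Some (inord a, om Hk j).
Definition lv (a b : nat) : bool := [|| (a == 0) && (b == 0), a + 1 == b | b + 1 == a].

Lemma lv_sym a b : lv a b = lv b a.
Proof. by rewrite /lv andbC; case: (a + 1 == b); case: (b + 1 == a); rewrite ?orbT ?orbF. Qed.

Lemma lv_pred a : lv a a.-1.
Proof. case: a => [|a] //; rewrite /lv /=. lia. Qed.

Lemma cycle_sym k : symmetric (cycle_rel k).
Proof. by move=> i j; rewrite /cycle_rel orbC. Qed.

Lemma myc_sym (T : finType) (e : rel T) m : symmetric e -> symmetric (myc_rel e m).
Proof.
move=> es [[a j]|] [[b l]|] //=.
rewrite es; congr (_ && _).
by case: (val a == 0); case: (val b == 0); case: (val a + 1 == val b); case: (val b + 1 == val a).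
Qed.

Lemma prod_sym (A B : finType) (eA : rel A) (eB : rel B) :
  symmetric eA -> symmetric eB -> symmetric (prod_rel eA eB).
Proof. by move=> sA sB x y; rewrite /prod_rel sA sB. Qed.

Lemma gadj m k (Hk : 0 < k) a c j : a <= m -> c <= m -> lv a c ->
  myc_rel (cycle_rel k) m (gv m Hk a j) (gv m Hk c j.+1).
Proof.
move=> am cm lac; rewrite /gv /= !inordK ?ltnS //; apply/andP; split; last exact: lac.
rewrite /cycle_rel /=; apply/orP; left.
by rewrite -[(j %% k).+1]addn1 modnDml addn1.
Qed.

Lemma gapex m k (Hk : 0 < k) j :
  myc_rel (cycle_rel k) m (gv m Hk m j) None.
Proof. by rewrite /gv /= inordK. Qed.

Lemma om_per k (Hk : 0 < k) p j : p %% k = 0 -> om Hk (p + j) = om Hk j.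
Proof. by move=> h; apply: val_inj; rewrite /= -modnDml h. Qed.


Lemma m2S i : 2 * i.+1 = (2 * i).+2.
Proof. lia. Qed.

Lemma sum_pairs (f : nat -> int) N :
  (\sum_(i < N) (f (2 * i)%N + f (2 * i)%N.+1) = \sum_(j < (2 * N)%N) f j)%R.
Proof.
elim: N => [|N IH]; first by rewrite muln0 !big_ord0.
by rewrite m2S !big_ord_recr /= IH addrA.
Qed.

Lemma sum_double (f : nat -> int) N : (forall j, f (N + j)%N = f j) ->
  (\sum_(j < (2 * N)%N) f j = 2 * \sum_(j < N) f j)%R.
Proof.
move=> hp; rewrite mul2n -addnn big_split_ord /=.
rewrite [X in (_ + X)%R](eq_bigr (fun i : 'I_N => f i)); last by move=> i _; rewrite hp.
rewrite [X in (X + _)%R](eq_bigr (fun i : 'I_N => f i)); last by [].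
set x := (\sum_(i < N) f i)%R.
lia.
Qed.

Lemma sum_pm1 (f : nat -> int) n : (forall j, f j = 1%R \/ f j = (-1)%R) ->
  exists q : int, (\sum_(j < n) f j = n%:Z + 2 * q)%R.
Proof.
move=> hf; elim: n => [|n [q IH]]; first by exists 0%R; rewrite big_ord0.
rewrite big_ord_recr /= IH; case: (hf n) => ->.
- by exists q; lia.
- by exists (q - 1)%R; lia.
Qed.

Lemma oddN s t : exists r, (2 * s + 1) * (2 * t + 1) = 2 * r + 1.
Proof. exists (2 * s * t + s + t); nia. Qed.


Theorem theorem12 (m n s t : nat) :
  0 < m -> 0 < n -> 0 < s -> 0 < t ->
  ~ is_cover_graph
      (prod_rel (myc_rel (cycle_rel (2 * s + 1)) m)
                (myc_rel (cycle_rel (2 * t + 1)) n)).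
Proof.
move=> m0 n0 _ _ [le [[_ [anti tr]] He]].
have Hk : 0 < 2 * s + 1 by rewrite addn1.
have Hl : 0 < 2 * t + 1 by rewrite addn1.
have es : symmetric (prod_rel (myc_rel (cycle_rel (2 * s + 1)) m)
                (myc_rel (cycle_rel (2 * t + 1)) n)).
  by apply: prod_sym; apply: myc_sym; apply: cycle_sym.
have c1 := C1 anti He.
have c2 := C2 anti tr es He.
pose U := Uv le.
pose N := ((2 * s + 1) * (2 * t + 1))%N.
pose A a b i := (gv m Hk a (2 * i), gv n Hl b (2 * i)).
pose E a b i := (gv m Hk a.-1 (2 * i).+1, gv n Hl b.-1 (2 * i).+1).
pose S a b := (\sum_(i < N) (U (A a b i) (E a b i) + U (E a b i) (A a b i.+1)))%R.
have adjP : forall a c b d j, a <= m -> c <= m -> lv a c -> b <= n -> d <= n -> lv b d ->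
    prod_rel (myc_rel (cycle_rel (2 * s + 1)) m) (myc_rel (cycle_rel (2 * t + 1)) n)
      (gv m Hk a j, gv n Hl b j) (gv m Hk c j.+1, gv n Hl d j.+1).
  by move=> a c b d j am cm ac bn dn bd; apply/andP; split; apply: gadj.
have gvper : forall (mm kk : nat) (Hkk : 0 < kk) a j j', j %% kk = j' %% kk ->
    gv mm Hkk a j = gv mm Hkk a j'.
  by move=> mm kk Hkk a j j' h; rewrite /gv; congr (Some (_, _)); apply: val_inj.
have Nk : N %% (2 * s + 1) = 0 by rewrite /N modnMr.
have Nl : N %% (2 * t + 1) = 0 by rewrite /N modnMl.
have per2 : forall (kk : nat) j, N %% kk = 0 -> (2 * N + j) %% kk = j %% kk.
  by move=> kk j h; rewrite -modnDml -modnMmr h muln0 mod0n add0n.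
have per1 : forall (kk : nat) j, N %% kk = 0 -> (N + j) %% kk = j %% kk.
  by move=> kk j h; rewrite -modnDml h add0n.
have Aper : forall a b, A a b N = A a b 0.
  move=> a b; rewrite /A muln0; congr (_, _); apply: gvper;
  by rewrite -modnMmr ?Nk ?Nl muln0.
have PR : forall a a' c b b' d, a <= m -> a' <= m -> c <= m -> b <= n -> b' <= n -> d <= n ->
    lv a c -> lv a' c -> lv b d -> lv b' d -> S a b = S a' b'.
  move=> a a' c b b' d am a'm cm bn b'n dn ac a'c bd b'd.
  have pm := leq_trans (leq_pred a) am; have pm' := leq_trans (leq_pred a') a'm.
  have pn := leq_trans (leq_pred b) bn; have pn' := leq_trans (leq_pred b') b'n.
  apply: (prism c1 c2 es (c := fun i => (gv m Hk c (2 * i).+1, gv n Hl d (2 * i).+1))).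
  - move=> i; split; first by apply: adjP => //; apply: lv_pred.
    by rewrite /A m2S; apply: adjP => //; rewrite lv_sym lv_pred.
  - move=> i; split; first by apply: adjP => //; apply: lv_pred.
    by rewrite /A m2S; apply: adjP => //; rewrite lv_sym lv_pred.
  - move=> i; rewrite /A m2S; split; apply: adjP => //; by rewrite lv_sym.
  - exact: Aper.
  - exact: Aper.
  - rewrite muln0; congr (_, _); apply: gvper;
    by rewrite -addn1 -modnDml -modnMmr ?Nk ?Nl muln0 mod0n.
have reachG : forall b, b <= n -> forall a, a <= m -> S a b = S 0 b.
  move=> b bn.
  have pn := leq_trans (leq_pred b) bn.
  suff H : forall a, (a <= m -> S a b = S 0 b) /\ (a.+1 <= m -> S a.+1 b = S 0 b).
    by move=> a am; case: (H a) => + _; apply.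
  elim=> [|a [IH1 IH2]]; split => //.
  - move=> h; apply: (PR 1 0 0 b b b.-1) => //; exact: lv_pred.
  - move=> h; rewrite -IH1; last by apply: leq_trans h; rewrite leqW.
    apply: (PR a.+2 a a.+1 b b b.-1) => //;
      first [exact: lv_pred | (rewrite /lv; lia) | lia].
have reachH : forall a, a <= m -> forall b, b <= n -> S a b = S a 0.
  move=> a am.
  have pm := leq_trans (leq_pred a) am.
  suff H : forall b, (b <= n -> S a b = S a 0) /\ (b.+1 <= n -> S a b.+1 = S a 0).
    by move=> b bn; case: (H b) => + _; apply.
  elim=> [|b [IH1 IH2]]; split => //.
  - move=> h; apply: (PR a a a.-1 1 0 0) => //; exact: lv_pred.
  - move=> h; rewrite -IH1; last by apply: leq_trans h; rewrite leqW.
    apply: (PR a a a.-1 b.+2 b b.+1) => //;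
      first [exact: lv_pred | (rewrite /lv; lia) | lia].
have Smn : S m n = 0%R.
  have pm := leq_trans (leq_pred m) (leqnn m).
  have pn := leq_trans (leq_pred n) (leqnn n).
  apply: (cone c1 c2 es (v := (None, None))).
  - move=> i; split; first by apply: adjP => //; apply: lv_pred.
    by rewrite /A m2S; apply: adjP => //; rewrite lv_sym lv_pred.
  - by move=> i; apply/andP; split; apply: gapex.
  - exact: Aper.
have S00 : S 0 0 = 0%R.
  by rewrite -(reachG 0 (leq0n n) m (leqnn m)) -(reachH m (leqnn m) n (leqnn n)).
pose W j := (gv m Hk 0 j, gv n Hl 0 j).
pose f j := U (W j) (W j.+1).
have Sf : S 0 0 = (\sum_(i < N) (f (2 * i)%N + f (2 * i)%N.+1))%R.
  by apply: eq_bigr => i _; rewrite /f /W /A m2S.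
have fper : forall j, f (N + j)%N = f j.
  have Wp : forall j, W (N + j) = W j.
    by move=> j; rewrite /W; congr (_, _); apply: gvper; rewrite per1 ?Nk ?Nl.
  by move=> j; rewrite /f -addnS !Wp.
have fpm : forall j, f j = 1%R \/ f j = (-1)%R.
  by move=> j; rewrite /f /U /Uv; case: (le _ _); [left|right].
have [q Hq] := sum_pm1 N fpm.
have [r Hr] := oddN s t.
move: S00; rewrite Sf sum_pairs sum_double // Hq.
rewrite -/N in Hr; rewrite Hr.
lia.
Qed.
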